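(* Consider a family, indexed by integers $m\ge 2$, of normalized $2^m$-APSK constellations $\mathcal{X}_m$ with $K_m$ rings, and let $\mathsf{X}$ (depending on $m$) be uniformly distributed over $\mathcal{X}_m$. Suppose that, with all implied constants independent of $m$ and $k$: (1) the number of rings satisfies $K_m=\Theta(\sqrt{2^m})$; (2) the pre-normalization radii $\widetilde r_1,\dots,\widetilde r_{K_m}$ satisfy $\widetilde r_k=\Theta(k/\sqrt{2^m})$ for $1\le k\le K_m$ and $\widetilde r_{k+1}-\widetilde r_k=\Theta(1/\sqrt{2^m})$ for $1\le k\le K_m-1$; (3) the numbers of points per ring are $N_k=a_m k$ for $1\le k\le K_m-1$ and $N_{K_m}=2^m-\sum_{i=1}^{K_m-1}N_i$, where the positive integer $a_m$ is chosen so that $N_{K_m}>0$ and $N_{K_m}=\Theta(K_m)$; (4) the phase offsets are aligned across rings: $\phi_{k+1}-\phi_k=0$ for $1\le k\le K_m-1$. Then $d_{\min}^2(\mathsf{X})=\Theta(2^{-m})$.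
   Context: A $2^m$-APSK constellation ($m\ge 2$) with $K_m$ rings is a set $$\mathcal{X}=\bigcup_{k=1}^{K_m}\left\{ r_k e^{j(\phi_k+2\pi n/N_k)} : n=0,1,\dots,N_k-1\right\}\subset\mathbb{C},$$ where $N_k\ge1$ is the number of points on ring $k$, $\sum_k N_k=2^m$, $r_k>0$ the ring radius and $\phi_k$ the phase offset. The normalized radii are obtained from pre-normalization radii $\widetilde r_k$ by $r_k=\widetilde r_k/\sqrt{E_0}$ with $E_0=\frac{1}{2^m}\sum_{k=1}^{K_m}N_k\widetilde r_k^2$, so that $\frac{1}{2^m}\sum_{x\in\mathcal{X}}|x|^2=1$. For $\mathsf{X}$ uniform on $\mathcal{X}$, $d_{\min}(\mathsf{X})$ is the minimum Euclidean distance between distinct points of $\mathcal{X}$. The notation $f=\Theta(g)$ means $c_1 g\le f\le c_2 g$ for positive constants $c_1,c_2$ independent of $m$ (and $k$). *)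

(* Defs.v *)
From Stdlib Require Import Reals Lra Lia.
Open Scope R_scope.

Fixpoint sumR1 (f : nat -> R) (n : nat) : R :=
  match n with O => 0 | S p => sumR1 f p + f (S p) end.

Fixpoint sumN1 (f : nat -> nat) (n : nat) : nat :=
  match n with O => O | S p => (sumN1 f p + f (S p))%nat end.

Definition E0 (m K : nat) (N : nat -> nat) (rt : nat -> R) : R :=
  / (2 ^ m) * sumR1 (fun k => INR (N k) * rt k ^ 2) K.

Definition rnorm (m K : nat) (N : nat -> nat) (rt : nat -> R) (k : nat) : R :=
  rt k / sqrt (E0 m K N rt).

(* The 2^m-APSK constellation (as a subset of C = R*R, a point z = (Re z, Im z)):
   points r_k e^{j(phi_k + 2 pi n / N_k)}, 1 <= k <= K, 0 <= n < N_k. *)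
Definition apsk (m K : nat) (N : nat -> nat) (rt phi : nat -> R) (z : R * R) : Prop :=
  exists k n : nat, (1 <= k <= K)%nat /\ (n < N k)%nat /\
    let r := rnorm m K N rt k in
    let t := phi k + 2 * PI * INR n / INR (N k) in
    z = (r * cos t, r * sin t).

Definition dist2 (x y : R * R) : R := (fst x - fst y) ^ 2 + (snd x - snd y) ^ 2.

Definition is_dmin2 (X : R * R -> Prop) (d : R) : Prop :=
  (exists x y, X x /\ X y /\ x <> y /\ dist2 x y = d) /\
  (forall x y, X x -> X y -> x <> y -> d <= dist2 x y).

(* Main.v *)
Require Import Defs.
From Stdlib Require Import Reals Lra Lia List Classical.
Open Scope R_scope.

Lemma sin_ge_lin z : 0 <= z <= PI/2 -> z/4 <= sin z.
Proof.
  intros [H0 H1]. pose proof PI_4 as HP4.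
  destruct (sin_bound z 0 H0 ltac:(lra)) as [Hs _].
  assert (E: sin_approx z (2*0+1) = z - z^3/6).
  { unfold sin_approx. simpl. unfold sin_term. simpl. field. }
  rewrite E in Hs. nra.
Qed.

Lemma sin_frac_lb (j Nn : nat) : (1 <= j)%nat -> (j < Nn)%nat ->
  PI^2 / (16 * INR Nn ^ 2) <= sin (PI * INR j / INR Nn) ^ 2.
Proof.
  intros Hj HjN. pose proof PI_RGT_0 as Hpi.
  assert (HN: 0 < INR Nn) by (apply lt_0_INR; lia).
  assert (key: forall i, (1 <= i)%nat -> (2*i <= Nn)%nat ->
     PI / (4 * INR Nn) <= sin (PI * INR i / INR Nn)).
  { intros i Hi Hi2.
    assert (Hi': 1 <= INR i) by (apply (le_INR 1); lia).
    assert (Hi2': 2 * INR i <= INR Nn) by (replace 2 with (INR 2) by (simpl; lra); rewrite <- mult_INR; apply le_INR; lia).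
    eapply Rle_trans; [|apply sin_ge_lin].
    - unfold Rdiv. apply Rle_trans with (PI * / INR Nn * /4).
      + right. field. lra.
      + apply Rmult_le_compat_r; [lra|]. rewrite Rmult_assoc. rewrite (Rmult_comm (INR i)). rewrite <- Rmult_assoc.
        rewrite <- (Rmult_1_r (PI * / INR Nn)) at 1. apply Rmult_le_compat_l; [|lra].
        apply Rmult_le_pos; [lra| left; apply Rinv_0_lt_compat; lra].
    - split.
      + apply Rmult_le_pos; [apply Rmult_le_pos; lra|left; apply Rinv_0_lt_compat; lra].
      + apply Rmult_le_reg_r with (2 * INR Nn); [lra|].
        unfold Rdiv. field_simplify; [|lra]. nra. }
  assert (Hlow: PI / (4 * INR Nn) <= sin (PI * INR j / INR Nn)).
  { destruct (Nat.le_gt_cases (2*j) Nn) as [Hc|Hc].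
    - apply key; lia.
    - replace (PI * INR j / INR Nn) with (PI - PI * INR (Nn - j) / INR Nn).
      + rewrite sin_PI_x. apply key; lia.
      + rewrite minus_INR by lia. field. lra. }
  assert (0 <= PI / (4 * INR Nn)) by (apply Rlt_le, Rdiv_lt_0_compat; lra).
  replace (PI^2 / (16 * INR Nn ^ 2)) with ((PI / (4 * INR Nn))^2) by (field; lra).
  apply pow_incr. lra.
Qed.

Lemma dist2_polar r1 r2 a b :
  dist2 (r1 * cos a, r1 * sin a) (r2 * cos b, r2 * sin b) =
  r1^2 + r2^2 - 2 * r1 * r2 * cos (a - b).
Proof.
  unfold dist2; simpl. rewrite cos_minus.
  pose proof (sin2_cos2 a); pose proof (sin2_cos2 b). unfold Rsqr in *. nra.
Qed.

Lemma dist_same r a b :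
  dist2 (r * cos a, r * sin a) (r * cos b, r * sin b) = 4 * r^2 * sin ((a-b)/2) ^ 2.
Proof.
  rewrite dist2_polar. replace (a - b) with (2 * ((a-b)/2)) at 1 by field.
  rewrite cos_2a_sin. ring.
Qed.

Lemma dist_diff r1 r2 a b : 0 <= r1 -> 0 <= r2 ->
  (r1 - r2)^2 <= dist2 (r1 * cos a, r1 * sin a) (r2 * cos b, r2 * sin b).
Proof.
  intros. rewrite dist2_polar. pose proof (COS_bound (a-b)).
  assert (0 <= r1 * r2) by nra. nra.
Qed.

Lemma min_list {A} (f : A -> R) (P : A -> Prop) (l : list A) :
  (exists a, In a l /\ P a) ->
  exists a, In a l /\ P a /\ forall b, In b l -> P b -> f a <= f b.
Proof.
  induction l as [|x l IH]; intros [a [Ha Pa]]; [destruct Ha|].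
  destruct (classic (exists a, In a l /\ P a)) as [Hex|Hno].
  - destruct (IH Hex) as [b [Hb [Pb Hmin]]].
    destruct (classic (P x /\ f x <= f b)) as [[Px Hx]|Hn].
    + exists x. split; [left; auto|]. split; auto.
      intros c [<-|Hc] Pc; [lra|]. specialize (Hmin c Hc Pc); lra.
    + exists b. split; [right; auto|]. split; auto.
      intros c [<-|Hc] Pc; [|auto]. apply Rnot_lt_le. intro Hlt. apply Hn; split; auto; lra.
  - destruct Ha as [<-|Ha]; [|exfalso; apply Hno; eauto].
    exists x. split; [left; auto|]. split; auto.
    intros c [<-|Hc] Pc; [lra|exfalso; apply Hno; eauto].
Qed.

Lemma dmin_exists (X : R * R -> Prop) (L : list (R*R)) :
  (forall z, X z <-> In z L) -> (exists x y, X x /\ X y /\ x <> y) ->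
  exists d, is_dmin2 X d.
Proof.
  intros HL [x [y [Hx [Hy Hxy]]]].
  destruct (min_list (fun p => dist2 (fst p) (snd p)) (fun p => fst p <> snd p)
     (list_prod L L)) as [[u v] [Hin [Huv Hmin]]].
  { exists (x, y). split; [apply in_prod; apply HL; auto| simpl; auto]. }
  apply in_prod_iff in Hin. destruct Hin as [Hu Hv].
  exists (dist2 u v). split.
  - exists u, v. repeat split; try apply HL; auto.
  - intros p q Hp Hq Hpq. apply (Hmin (p, q)); simpl; auto.
    apply in_prod; apply HL; auto.
Qed.

Lemma dist2_sym x y : dist2 x y = dist2 y x.
Proof. unfold dist2. ring. Qed.

Lemma lower_same r ph (Nn n n' : nat) : (n <> n')%nat -> (n < Nn)%nat -> (n' < Nn)%nat ->
  r^2 * PI^2 / (4 * INR Nn ^ 2) <=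
  dist2 (r * cos (ph + 2 * PI * INR n / INR Nn), r * sin (ph + 2 * PI * INR n / INR Nn))
        (r * cos (ph + 2 * PI * INR n' / INR Nn), r * sin (ph + 2 * PI * INR n' / INR Nn)).
Proof.
  intros Hne Hn Hn'. rewrite dist_same.
  assert (HN: 0 < INR Nn) by (apply lt_0_INR; lia).
  assert (Hs: PI^2 / (16 * INR Nn ^ 2) <=
     sin ((ph + 2 * PI * INR n / INR Nn - (ph + 2 * PI * INR n' / INR Nn)) / 2) ^ 2).
  { assert (Hc: (n < n' \/ n' < n)%nat) by lia. destruct Hc as [Hl|Hl].
    - replace ((ph + 2 * PI * INR n / INR Nn - (ph + 2 * PI * INR n' / INR Nn)) / 2)
        with (- (PI * INR (n' - n) / INR Nn)) by (rewrite minus_INR by lia; field; lra).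
      rewrite sin_neg. replace ((- sin (PI * INR (n' - n) / INR Nn))^2) with
        (sin (PI * INR (n' - n) / INR Nn)^2) by ring.
      apply sin_frac_lb; lia.
    - replace ((ph + 2 * PI * INR n / INR Nn - (ph + 2 * PI * INR n' / INR Nn)) / 2)
        with (PI * INR (n - n') / INR Nn) by (rewrite minus_INR by lia; field; lra).
      apply sin_frac_lb; lia. }
  assert (0 <= r^2) by (apply pow2_ge_0).
  replace (r ^ 2 * PI ^ 2 / (4 * INR Nn ^ 2)) with (4 * r^2 * (PI ^ 2 / (16 * INR Nn ^ 2))) by (field; lra).
  apply Rmult_le_compat_l; lra.
Qed.


Lemma sumN1_INR f n : INR (sumN1 f n) = sumR1 (fun k => INR (f k)) n.
Proof. induction n; simpl sumN1; simpl sumR1; [reflexivity|]. rewrite plus_INR, IHn. reflexivity. Qed.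

Lemma sumR1_le f g n : (forall k, (1 <= k <= n)%nat -> f k <= g k) -> sumR1 f n <= sumR1 g n.
Proof.
  induction n; intros H; simpl; [lra|].
  apply Rplus_le_compat; [apply IHn; intros; apply H; lia| apply H; lia].
Qed.

Lemma sumR1_ext f g n : (forall k, (1 <= k <= n)%nat -> f k = g k) -> sumR1 f n = sumR1 g n.
Proof.
  induction n; intros H; simpl; [lra|].
  rewrite IHn, H; [reflexivity|lia|intros; apply H; lia].
Qed.

Lemma sumR1_scal c f n : sumR1 (fun k => c * f k) n = c * sumR1 f n.
Proof. induction n; simpl; [ring|]. rewrite IHn. ring. Qed.

Lemma sumR1_nonneg f n : (forall k, (1 <= k <= n)%nat -> 0 <= f k) -> 0 <= sumR1 f n.
Proof.
  induction n; intros H; simpl; [lra|].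
  apply Rplus_le_le_0_compat; [apply IHn; intros; apply H; lia| apply H; lia].
Qed.

Lemma sum_id n : sumR1 (fun k => INR k) n = INR n * (INR n + 1) / 2.
Proof. induction n. - simpl. field. - change (sumR1 (fun k => INR k) (S n)) with (sumR1 (fun k => INR k) n + INR (S n)). rewrite IHn, S_INR. field. Qed.

Lemma sum_cube n : sumR1 (fun k => INR k ^ 3) n = (INR n * (INR n + 1) / 2) ^ 2.
Proof. induction n. - simpl. field. - change (sumR1 (fun k => INR k ^ 3) (S n)) with (sumR1 (fun k => INR k ^ 3) n + INR (S n) ^ 3). rewrite IHn, S_INR. field. Qed.

Definition ptf m K N rt phi k n : R * R :=
  (rnorm m K N rt k * cos (phi k + 2 * PI * INR n / INR (N k)),
   rnorm m K N rt k * sin (phi k + 2 * PI * INR n / INR (N k))).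

Lemma apsk_iff m K N rt phi z : apsk m K N rt phi z <->
  exists k n, (1 <= k <= K)%nat /\ (n < N k)%nat /\ z = ptf m K N rt phi k n.
Proof. unfold apsk, ptf. reflexivity. Qed.

Lemma apsk_list m K N rt phi : forall z, apsk m K N rt phi z <->
  In z (flat_map (fun k => map (fun n => ptf m K N rt phi k n) (seq 0 (N k))) (seq 1 K)).
Proof.
  intros z. rewrite apsk_iff, in_flat_map. split.
  - intros [k [n [Hk [Hn ->]]]]. exists k. split.
    + apply in_seq. lia.
    + apply in_map_iff. exists n. split; auto. apply in_seq. lia.
  - intros [k [Hk Hz]]. apply in_seq in Hk. apply in_map_iff in Hz.
    destruct Hz as [n [<- Hn]]. apply in_seq in Hn. exists k, n. repeat split; lia.
Qed.

Lemma ratio_lemma X A r Nn k : 0 < A -> 0 < Nn -> 0 < k -> 0 <= X ->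
  X * k^2 <= r^2 -> Nn <= A * k -> X / A^2 <= r^2 / Nn^2.
Proof.
  intros HA HN Hk HX H1 H2.
  replace (X / A^2) with (X * k^2 / (A*k)^2) by (field; lra).
  unfold Rdiv. apply Rmult_le_compat; try lra.
  - apply Rmult_le_pos; [lra|]. apply pow2_ge_0.
  - left; apply Rinv_0_lt_compat. apply pow_lt. nra.
  - apply Rinv_le_contravar. apply pow_lt; lra. apply pow_incr; lra.
Qed.

Lemma sumR1_last f n : (1 <= n)%nat -> sumR1 f n = sumR1 f (n-1) + f n.
Proof. intros H. destruct n; [lia|]. simpl. rewrite Nat.sub_0_r. reflexivity. Qed.

Lemma per_m (m K a : nat) (N : nat -> nat) (rt phi : nat -> R)
  (cK1 cK2 r1 r2 d1 d2 n1 n2 : R)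
  (pcK1 : 0 < cK1) (pcK2 : 0 < cK2) (pr1 : 0 < r1) (pr2 : 0 < r2)
  (pd1 : 0 < d1) (pd2 : 0 < d2) (pn1 : 0 < n1) (pn2 : 0 < n2)
  (HK : cK1 * sqrt (2 ^ m) <= INR K <= cK2 * sqrt (2 ^ m))
  (Hr : forall k, (1 <= k <= K)%nat ->
          r1 * (INR k / sqrt (2 ^ m)) <= rt k <= r2 * (INR k / sqrt (2 ^ m)))
  (Hdr : forall k, (1 <= k <= K - 1)%nat ->
          d1 / sqrt (2 ^ m) <= rt (S k) - rt k <= d2 / sqrt (2 ^ m))
  (Ha : (1 <= a)%nat)
  (HN : forall k, (1 <= k <= K - 1)%nat -> N k = (a * k)%nat)
  (HNK : N K = (2 ^ m - sumN1 N (K - 1))%nat /\ (sumN1 N (K - 1) < 2 ^ m)%nat)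
  (HNKth : n1 * INR K <= INR (N K) <= n2 * INR K)
  (Hphi : forall k, (1 <= k <= K - 1)%nat -> phi (S k) - phi k = 0) (Hm : (2 <= m)%nat) :
  let cE := Rmin (cK1^2) (cK1^4/16) in
  let El := r1^2 * cE in
  let Eu := (r2 * cK2)^2 in
  let A := 4 / cK1^2 + n2 in
  let clo := Rmin (d1^2 / Eu) (r1^2 * PI^2 / (4 * A^2 * Eu)) in
  let chi := d2^2 / El + 4 * r2^2 / El in
  exists d, is_dmin2 (apsk m K N rt phi) d /\ clo * / 2 ^ m <= d <= chi * / 2 ^ m.
Proof.
  intros cE El Eu A clo chi.
  pose proof PI_RGT_0 as Hpi.
  assert (HcE : 0 < cE) by (apply Rmin_pos; [apply pow_lt|apply Rdiv_lt_0_compat; [apply pow_lt|]]; lra).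
  assert (HEl : 0 < El) by (unfold El; apply Rmult_lt_0_compat; [apply pow_lt|]; lra).
  assert (HEu : 0 < Eu) by (unfold Eu; apply pow_lt; nra).
  assert (HA : 0 < A) by (unfold A; assert (0 < 4 / cK1^2) by (apply Rdiv_lt_0_compat; [lra|apply pow_lt; lra]); lra).
  set (M := 2 ^ m) in *.
  assert (HM : 0 < M) by (apply pow_lt; lra).
  set (s := sqrt M) in *.
  assert (Hs : 0 < s) by (apply sqrt_lt_R0; lra).
  assert (Hss : s * s = M) by (apply sqrt_sqrt; lra).
  set (u := / s).
  assert (Hu : 0 < u) by (apply Rinv_0_lt_compat; lra).
  assert (Hsu : s * u = 1) by (unfold u; field; lra).
  assert (Huu : u * u = / M) by (rewrite <- Hss; unfold u; field; lra).
  assert (HMnat : INR (2 ^ m)%nat = M) by (rewrite pow_INR; reflexivity).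
  assert (HK1 : (1 <= K)%nat).
  { assert (0 < INR K) by nra. apply INR_lt. simpl. lra. }
  assert (Hr' : forall k, (1 <= k <= K)%nat -> r1 * INR k * u <= rt k <= r2 * INR k * u).
  { intros k Hk. specialize (Hr k Hk). unfold Rdiv in Hr. fold u in Hr. lra. }
  assert (Hdr' : forall k, (1 <= k <= K - 1)%nat -> d1 * u <= rt (S k) - rt k <= d2 * u).
  { intros k Hk. specialize (Hdr k Hk). unfold Rdiv in Hdr. fold u in Hdr. lra. }
  clear Hr Hdr.
  assert (HKu : INR K * u <= cK2) by nra.
  assert (HKs : cK1 * s <= INR K) by lra.
  assert (HINRk : forall k, (1 <= k <= K)%nat -> 1 <= INR k <= INR K).
  { intros k Hk. split; [apply (le_INR 1)|apply le_INR]; lia. }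
  assert (Hrpos : forall k, (1 <= k <= K)%nat -> 0 < rt k).
  { intros k Hk. destruct (Hr' k Hk). destruct (HINRk k Hk).
    assert (0 < r1 * INR k) by nra. assert (0 < r1 * INR k * u) by (apply Rmult_lt_0_compat; lra). lra. }
  assert (Hrub : forall k, (1 <= k <= K)%nat -> rt k <= r2 * cK2).
  { intros k Hk. destruct (Hr' k Hk). destruct (HINRk k Hk).
    assert (INR k * u <= INR K * u) by nra.
    assert (r2 * (INR k * u) <= r2 * cK2) by nra. rewrite <- Rmult_assoc in *. lra. }
  destruct HNK as [HNK HNK2].
  assert (HsumN : sumN1 N K = (2 ^ m)%nat).
  { replace K with (S (K - 1)) at 1 by lia. simpl sumN1. replace (S (K - 1)) with K by lia. lia. }
  assert (HsumR : sumR1 (fun k => INR (N k)) K = M) by (rewrite <- sumN1_INR, HsumN; exact HMnat).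
  assert (HNpos : forall k, (1 <= k <= K)%nat -> (1 <= N k)%nat).
  { intros k Hk. destruct (Nat.eq_dec k K) as [->|Hne]; [lia|]. rewrite HN by lia. nia. }
  assert (HNposR : forall k, (1 <= k <= K)%nat -> 1 <= INR (N k)).
  { intros k Hk. apply (le_INR 1). auto. }
  assert (HKsq : cK1^2 * M <= INR K ^ 2).
  { rewrite <- Hss. assert (0 <= cK1 * s) by nra. replace (cK1^2 * (s*s)) with ((cK1*s)^2) by ring.
    apply pow_incr; lra. }
  set (T := INR (K-1) * (INR (K-1) + 1) / 2).
  assert (HT : (2 <= K)%nat -> INR K ^ 2 / 4 <= T).
  { intros HK2. unfold T. rewrite minus_INR by lia. simpl (INR 1).
    assert (2 <= INR K) by (apply (le_INR 2); lia). nra. }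
  assert (Hlin : INR (sumN1 N (K-1)) = INR a * T).
  { rewrite sumN1_INR. rewrite (sumR1_ext _ (fun k => INR a * INR k)).
    - rewrite sumR1_scal, sum_id. reflexivity.
    - intros k Hk. rewrite HN by lia. apply mult_INR. }
  assert (Hcube : sumR1 (fun k => INR (N k) * INR k ^ 2) (K-1) = INR a * T^2).
  { rewrite (sumR1_ext _ (fun k => INR a * INR k ^ 3)).
    - rewrite sumR1_scal, sum_cube. reflexivity.
    - intros k Hk. rewrite HN by lia. rewrite mult_INR. ring. }
  assert (Hsq : cE * M^2 <= sumR1 (fun k => INR (N k) * INR k ^ 2) K).
  { destruct (Nat.eq_dec K 1) as [HK1'|HK1'].
    - rewrite HK1'. simpl sumR1. rewrite HK1' in HNK. simpl in HNK. rewrite Nat.sub_0_r in HNK.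
      rewrite HNK, HMnat. simpl (INR 1).
      assert (cK1 * s <= 1) by (rewrite HK1' in HKs; simpl in HKs; lra).
      assert (cK1^2 * M <= 1) by (rewrite <- Hss; assert (0 <= cK1 * s) by nra; nra).
      assert (cE <= cK1^2) by apply Rmin_l. nra.
    - rewrite sumR1_last by lia.
      rewrite Hcube.
      assert (0 <= INR (N K) * INR K ^ 2) by (apply Rmult_le_pos; [apply pos_INR|apply pow2_ge_0]).
      assert (1 <= INR a) by (apply (le_INR 1); lia).
      assert (HT2 := HT ltac:(lia)).
      assert (cK1^2 * M / 4 <= T) by lra.
      assert (0 <= cK1^2 * M / 4) by (apply Rmult_le_pos; [apply Rmult_le_pos; [apply pow2_ge_0|lra]|lra]).
      assert ((cK1^2 * M / 4)^2 <= T^2) by (apply pow_incr; lra).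
      assert (cE <= cK1^4/16) by apply Rmin_r.
      assert (T^2 <= INR a * T^2) by (assert (0 <= T^2) by apply pow2_ge_0; nra).
      assert (cE * M^2 <= cK1^4/16 * M^2) by (apply Rmult_le_compat_r; [apply pow2_ge_0|lra]).
      replace (cK1^4/16 * M^2) with ((cK1^2 * M / 4)^2) in * by field. lra. }
  set (E := E0 m K N rt).
  assert (HEdef : E = / M * sumR1 (fun k => INR (N k) * rt k ^ 2) K) by reflexivity.
  assert (HEu' : E <= Eu).
  { rewrite HEdef.
    assert (sumR1 (fun k => INR (N k) * rt k ^ 2) K <= sumR1 (fun k => Eu * INR (N k)) K).
    { apply sumR1_le. intros k Hk. rewrite Rmult_comm. apply Rmult_le_compat_r; [apply pos_INR|].
      unfold Eu. pose proof (Hrpos k Hk). pose proof (Hrub k Hk). apply pow_incr; lra. }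
    rewrite sumR1_scal, HsumR in H.
    apply Rle_trans with (/ M * (Eu * M)); [apply Rmult_le_compat_l; [left; apply Rinv_0_lt_compat|]; lra|].
    right; field; lra. }
  assert (HEl' : El <= E).
  { rewrite HEdef.
    assert (sumR1 (fun k => (r1^2 * / M) * (INR (N k) * INR k ^ 2)) K <= sumR1 (fun k => INR (N k) * rt k ^ 2) K).
    { apply sumR1_le. intros k Hk. pose proof (Hr' k Hk). destruct (HINRk k Hk).
      assert (0 <= r1 * INR k * u) by (apply Rmult_le_pos; [apply Rmult_le_pos|]; lra).
      assert ((r1 * INR k * u)^2 <= rt k ^ 2) by (apply pow_incr; lra).
      replace (r1 ^ 2 * / M * (INR (N k) * INR k ^ 2)) with (INR (N k) * (r1 * INR k * u)^2)
        by (rewrite <- Huu; ring).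
      apply Rmult_le_compat_l; [apply pos_INR|lra]. }
    rewrite sumR1_scal in H.
    assert (r1 ^ 2 * / M * (cE * M^2) <= r1 ^ 2 * / M * sumR1 (fun k => INR (N k) * INR k ^ 2) K).
    { apply Rmult_le_compat_l; [|lra]. apply Rmult_le_pos; [apply pow2_ge_0|left; apply Rinv_0_lt_compat; lra]. }
    replace (r1 ^ 2 * / M * (cE * M ^ 2)) with (M * El) in H0 by (unfold El; field; lra).
    apply Rmult_le_reg_l with M; [lra|]. rewrite <- Rmult_assoc, Rinv_r, Rmult_1_l; lra. }
  assert (HE : 0 < E) by lra.
  set (w := / sqrt E).
  assert (Hw : 0 < w) by (apply Rinv_0_lt_compat, sqrt_lt_R0; lra).
  assert (Hww : w * w = / E) by (unfold w; rewrite <- Rinv_mult, sqrt_sqrt; lra).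
  assert (Hrn : forall k, rnorm m K N rt k = rt k * w) by reflexivity.
  assert (Hwl : / Eu <= w * w) by (rewrite Hww; apply Rinv_le_contravar; lra).
  assert (Hwu : w * w <= / El) by (rewrite Hww; apply Rinv_le_contravar; lra).
  assert (HNA : forall k, (1 <= k <= K)%nat -> INR (N k) <= A * INR k).
  { intros k Hk. destruct (HINRk k Hk).
    assert (4 / cK1^2 * INR k >= 0) by (apply Rle_ge, Rmult_le_pos; [apply Rlt_le, Rdiv_lt_0_compat; [lra|apply pow_lt; lra]|lra]).
    destruct (Nat.eq_dec k K) as [->|Hne].
    - unfold A. nra.
    - rewrite HN by lia. rewrite mult_INR.
      assert (Hlt : INR (sumN1 N (K-1)) < M) by (rewrite <- HMnat; apply lt_INR; lia).
      rewrite Hlin in Hlt.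
      assert (HT2 := HT ltac:(lia)).
      assert (cK1^2 * M / 4 <= T) by lra.
      assert (0 <= INR a) by apply pos_INR.
      assert (INR a * (cK1^2 * M / 4) < M) by nra.
      assert (INR a * cK1^2 < 4) by nra.
      assert (INR a <= 4 / cK1^2).
      { apply Rmult_le_reg_r with (cK1^2); [apply pow_lt; lra|]. unfold Rdiv. rewrite Rmult_assoc, Rinv_l; [lra|]. apply pow_nonzero; lra. }
      unfold A. nra. }
  assert (Hmono : forall k k', (1 <= k)%nat -> (k < k' <= K)%nat -> d1 * u <= rt k' - rt k).
  { intros k k' Hk Hk'. induction k' as [|k' IH]; [lia|].
    destruct (Nat.eq_dec k' k) as [->|Hne].
    - apply Hdr'; lia.
    - assert (d1 * u <= rt k' - rt k) by (apply IH; lia).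
      pose proof (Hdr' k' ltac:(lia)). assert (0 < d1 * u) by nra. lra. }
  assert (Hdiff : forall k k' n n', (1 <= k)%nat -> (k < k' <= K)%nat ->
     clo * / M <= dist2 (ptf m K N rt phi k n) (ptf m K N rt phi k' n')).
  { intros k k' n n' Hk Hk'. unfold ptf. rewrite !Hrn.
    assert (0 < rt k) by (apply Hrpos; lia). assert (0 < rt k') by (apply Hrpos; lia).
    eapply Rle_trans; [|apply dist_diff; nra].
    pose proof (Hmono k k' Hk Hk').
    assert ((d1*u)^2 <= (rt k' - rt k)^2) by (apply pow_incr; nra).
    assert (Hq : (d1*u)^2 * / Eu <= (rt k' - rt k)^2 * (w*w)).
    { apply Rmult_le_compat; try lra. apply pow2_ge_0. left; apply Rinv_0_lt_compat; lra. }
    replace ((rt k * w - rt k' * w)^2) with ((rt k' - rt k)^2 * (w*w)) by ring.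
    replace ((d1*u)^2 * / Eu) with (d1^2 / Eu * / M) in Hq by (rewrite <- Huu; field; lra).
    assert (clo <= d1^2/Eu) by apply Rmin_l.
    assert (clo * / M <= d1^2/Eu * / M) by (apply Rmult_le_compat_r; [left; apply Rinv_0_lt_compat|]; lra).
    lra. }
  assert (Hsame : forall k n n', (1 <= k <= K)%nat -> (n <> n')%nat -> (n < N k)%nat -> (n' < N k)%nat ->
     clo * / M <= dist2 (ptf m K N rt phi k n) (ptf m K N rt phi k n')).
  { intros k n n' Hk Hne Hn Hn'. unfold ptf. rewrite !Hrn.
    eapply Rle_trans; [|apply lower_same; auto].
    destruct (HINRk k Hk). pose proof (Hr' k Hk). pose proof (HNposR k Hk). pose proof (HNA k Hk).
    assert (HX : 0 <= r1^2 * / M * / Eu).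
    { apply Rmult_le_pos; [apply Rmult_le_pos; [apply pow2_ge_0|]|]; left; apply Rinv_0_lt_compat; lra. }
    assert (Hrt : (r1 * INR k * u)^2 <= rt k ^ 2) by (apply pow_incr; split; [apply Rmult_le_pos; [apply Rmult_le_pos|]|]; lra).
    assert (Hkey : r1^2 * / M * / Eu * INR k ^ 2 <= (rt k * w)^2).
    { replace (r1^2 * / M * / Eu * INR k ^ 2) with ((r1 * INR k * u)^2 * / Eu) by (rewrite <- Huu; ring).
      replace ((rt k * w)^2) with (rt k ^ 2 * (w * w)) by ring.
      apply Rmult_le_compat; try lra; [apply pow2_ge_0|left; apply Rinv_0_lt_compat; lra]. }
    pose proof (ratio_lemma (r1^2 * / M * / Eu) A (rt k * w) (INR (N k)) (INR k) HA ltac:(lra) ltac:(lra) HX Hkey H3) as Hrat.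
    assert (clo <= r1^2 * PI^2 / (4 * A^2 * Eu)) by apply Rmin_r.
    apply Rle_trans with (r1^2 * PI^2 / (4 * A^2 * Eu) * / M).
    { apply Rmult_le_compat_r; [left; apply Rinv_0_lt_compat|]; lra. }
    replace (r1^2 * PI^2 / (4 * A^2 * Eu) * / M) with (PI^2/4 * (r1^2 * / M * / Eu / A^2)) by (field; repeat split; lra).
    replace ((rt k * w) ^ 2 * PI ^ 2 / (4 * INR (N k) ^ 2)) with (PI^2/4 * ((rt k * w) ^ 2 / INR (N k) ^ 2)) by (field; lra).
    apply Rmult_le_compat_l; [|lra]. apply Rmult_le_pos; [apply pow2_ge_0|lra]. }
  assert (Hlow : forall x y, apsk m K N rt phi x -> apsk m K N rt phi y -> x <> y -> clo * / M <= dist2 x y).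
  { intros x y Hx Hy Hxy. rewrite apsk_iff in Hx, Hy.
    destruct Hx as [k [n [Hk [Hn ->]]]]. destruct Hy as [k' [n' [Hk' [Hn' ->]]]].
    assert (Hc : (k < k' \/ k' < k \/ k = k')%nat) by lia.
    destruct Hc as [Hc|[Hc| <-]].
    - apply Hdiff; lia.
    - rewrite dist2_sym. apply Hdiff; lia.
    - apply Hsame; auto; intros <-; auto. }
  assert (Hd0 : forall x, dist2 x x = 0) by (intros; unfold dist2; ring).
  assert (Hchi1 : 0 <= d2^2 / El * / M).
  { apply Rmult_le_pos; [apply Rmult_le_pos; [apply pow2_ge_0|]|]; left; apply Rinv_0_lt_compat; lra. }
  assert (Hchi2 : 0 <= 4 * r2^2 / El * / M).
  { apply Rmult_le_pos; [apply Rmult_le_pos; [apply Rmult_le_pos; [lra|apply pow2_ge_0]|]|]; left; apply Rinv_0_lt_compat; lra. }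
  assert (Hchi : chi * / M = d2^2 / El * / M + 4 * r2^2 / El * / M) by (unfold chi; field; lra).
  assert (Hwit : exists x y, apsk m K N rt phi x /\ apsk m K N rt phi y /\ x <> y /\ dist2 x y <= chi * / M).
  { destruct (Nat.eq_dec K 1) as [HK1'|HK1'].
    - assert (HN1 : N 1%nat = (2 ^ m)%nat) by (rewrite <- HK1' at 1; rewrite HNK, HK1'; simpl; lia).
      assert (HM4 : 4 <= M) by (unfold M; replace 4 with (2^2) by ring; apply Rle_pow; [lra|lia]).
      assert (HN2 : (2 <= N 1%nat)%nat) by (apply INR_le; rewrite HN1, HMnat; simpl; lra).
      exists (ptf m K N rt phi 1 0), (ptf m K N rt phi 1 1).
      assert (Hpos : 0 < dist2 (ptf m K N rt phi 1 0) (ptf m K N rt phi 1 1)).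
      { unfold ptf. eapply Rlt_le_trans; [|apply lower_same; lia].
        assert (0 < rt 1%nat) by (apply Hrpos; lia). assert (0 < INR (N 1%nat)) by (apply lt_0_INR; lia).
        rewrite Hrn. assert (0 < rt 1%nat * w) by nra.
        apply Rdiv_lt_0_compat; [|apply Rmult_lt_0_compat; [lra|apply pow_lt; lra]]. apply Rmult_lt_0_compat; apply pow_lt; lra. }
      repeat split.
      + apply apsk_iff. exists 1%nat, 0%nat. repeat split; lia.
      + apply apsk_iff. exists 1%nat, 1%nat. repeat split; lia.
      + intros He. rewrite He, Hd0 in Hpos. lra.
      + unfold ptf. rewrite dist_same, !Hrn. rewrite Hchi.
        pose proof (SIN_bound ((phi 1%nat + 2 * PI * INR 0 / INR (N 1%nat) - (phi 1%nat + 2 * PI * INR 1 / INR (N 1%nat))) / 2)).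
        set (sn := sin _) in *.
        assert (sn^2 <= 1) by nra.
        pose proof (Hr' 1%nat ltac:(lia)) as Hr1. simpl (INR 1) in Hr1.
        assert (0 < rt 1%nat) by (apply Hrpos; lia).
        assert (Hq : (rt 1%nat)^2 * (w * w) <= (r2 * u)^2 * / El).
        { apply Rmult_le_compat; try lra. apply pow2_ge_0. nra. apply pow_incr; nra. }
        replace ((r2 * u)^2 * / El) with (r2^2 / El * / M) in Hq by (rewrite <- Huu; field; lra).
        assert (0 <= (rt 1%nat * w)^2) by apply pow2_ge_0.
        assert (4 * (rt 1%nat * w) ^ 2 * sn ^ 2 <= 4 * (rt 1%nat * w) ^ 2) by nra.
        replace (4 * r2^2 / El * / M) with (4 * (r2^2 / El * / M)) by (field; lra).
        replace ((rt 1%nat * w)^2) with ((rt 1%nat)^2 * (w * w)) in * by ring. lra.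
    - exists (ptf m K N rt phi 1 0), (ptf m K N rt phi 2 0).
      assert (Hph : phi 2%nat = phi 1%nat) by (pose proof (Hphi 1%nat ltac:(lia)); lra).
      assert (HN1 : (1 <= N 1%nat)%nat) by (apply HNpos; lia).
      assert (HN2 : (1 <= N 2%nat)%nat) by (apply HNpos; lia).
      assert (Hdd : dist2 (ptf m K N rt phi 1 0) (ptf m K N rt phi 2 0) = (rt 2%nat - rt 1%nat)^2 * (w * w)).
      { unfold ptf. rewrite !Hrn, Hph, dist2_polar.
        replace (phi 1%nat + 2 * PI * INR 0 / INR (N 1%nat) - (phi 1%nat + 2 * PI * INR 0 / INR (N 2%nat))) with 0
          by (simpl INR; unfold Rdiv; ring).
        rewrite cos_0. ring. }
      pose proof (Hdr' 1%nat ltac:(lia)) as Hd1.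
      assert (0 < d1 * u) by nra.
      repeat split.
      + apply apsk_iff. exists 1%nat, 0%nat. repeat split; lia.
      + apply apsk_iff. exists 2%nat, 0%nat. repeat split; lia.
      + intros He. rewrite He, Hd0 in Hdd. assert (0 < (rt 2%nat - rt 1%nat)^2 * (w*w)) by (apply Rmult_lt_0_compat; [apply pow_lt|]; simpl in Hd1; nra). lra.
      + rewrite Hdd, Hchi.
        assert (Hq : (rt 2%nat - rt 1%nat)^2 * (w * w) <= (d2 * u)^2 * / El).
        { apply Rmult_le_compat; try lra. apply pow2_ge_0. nra. apply pow_incr; nra. }
        replace ((d2 * u)^2 * / El) with (d2^2 / El * / M) in Hq by (rewrite <- Huu; field; lra).
        lra. }
  destruct Hwit as [x0 [y0 [Hx0 [Hy0 [Hxy0 Hd0b]]]]].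
  destruct (dmin_exists _ _ (apsk_list m K N rt phi)) as [d Hd].
  { exists x0, y0. auto. }
  exists d. split; [exact Hd|].
  destruct Hd as [[x [y [Hx [Hy [Hxy Hdxy]]]]] Hmin]. split.
  - rewrite <- Hdxy. apply Hlow; auto.
  - eapply Rle_trans; [apply (Hmin x0 y0); auto|exact Hd0b].
Qed.
Theorem proposition1
  (K : nat -> nat) (a : nat -> nat) (N : nat -> nat -> nat)
  (rt : nat -> nat -> R) (phi : nat -> nat -> R)
  (* (1) K_m = Theta(sqrt(2^m)) *)
  (HK : exists c1 c2, 0 < c1 /\ 0 < c2 /\ forall m, (2 <= m)%nat ->
          c1 * sqrt (2 ^ m) <= INR (K m) <= c2 * sqrt (2 ^ m))
  (* (2) rt_k = Theta(k / sqrt(2^m)), rt_{k+1} - rt_k = Theta(1/sqrt(2^m)) *)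
  (Hr : exists c1 c2, 0 < c1 /\ 0 < c2 /\ forall m k, (2 <= m)%nat ->
          (1 <= k <= K m)%nat ->
          c1 * (INR k / sqrt (2 ^ m)) <= rt m k <= c2 * (INR k / sqrt (2 ^ m)))
  (Hdr : exists c1 c2, 0 < c1 /\ 0 < c2 /\ forall m k, (2 <= m)%nat ->
          (1 <= k <= K m - 1)%nat ->
          c1 / sqrt (2 ^ m) <= rt m (S k) - rt m k <= c2 / sqrt (2 ^ m))
  (* (3) N_k = a_m k for k < K_m, N_{K_m} = 2^m - sum_{i<K_m} N_i,
         a_m positive, N_{K_m} > 0 and N_{K_m} = Theta(K_m) *)
  (Ha : forall m, (2 <= m)%nat -> (1 <= a m)%nat)
  (HN : forall m k, (2 <= m)%nat -> (1 <= k <= K m - 1)%nat ->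
          N m k = (a m * k)%nat)
  (HNK : forall m, (2 <= m)%nat ->
          N m (K m) = (2 ^ m - sumN1 (N m) (K m - 1))%nat /\
          (sumN1 (N m) (K m - 1) < 2 ^ m)%nat)
  (HNKth : exists c1 c2, 0 < c1 /\ 0 < c2 /\ forall m, (2 <= m)%nat ->
          c1 * INR (K m) <= INR (N m (K m)) <= c2 * INR (K m))
  (* (4) aligned phase offsets *)
  (Hphi : forall m k, (2 <= m)%nat -> (1 <= k <= K m - 1)%nat ->
          phi m (S k) - phi m k = 0) :
  (* d_min^2(X) = Theta(2^{-m}) *)
  exists c1 c2, 0 < c1 /\ 0 < c2 /\ forall m, (2 <= m)%nat ->
    exists d, is_dmin2 (apsk m (K m) (N m) (rt m) (phi m)) d /\
      c1 * / 2 ^ m <= d <= c2 * / 2 ^ m.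
Proof.
  destruct HK as [cK1 [cK2 [pcK1 [pcK2 HK']]]].
  destruct Hr as [r1 [r2 [pr1 [pr2 Hr']]]].
  destruct Hdr as [d1 [d2 [pd1 [pd2 Hdr']]]].
  destruct HNKth as [n1 [n2 [pn1 [pn2 HNK']]]].
  pose proof PI_RGT_0 as Hpi.
  set (cE := Rmin (cK1^2) (cK1^4/16)).
  set (El := r1^2 * cE).
  set (Eu := (r2 * cK2)^2).
  set (A := 4 / cK1^2 + n2).
  assert (HcE : 0 < cE) by (apply Rmin_pos; [apply pow_lt|apply Rdiv_lt_0_compat; [apply pow_lt|]]; lra).
  assert (HEl : 0 < El) by (unfold El; apply Rmult_lt_0_compat; [apply pow_lt|]; lra).
  assert (HEu : 0 < Eu) by (unfold Eu; apply pow_lt; nra).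
  assert (HA : 0 < A) by (unfold A; assert (0 < 4 / cK1^2) by (apply Rdiv_lt_0_compat; [lra|apply pow_lt; lra]); lra).
  exists (Rmin (d1^2 / Eu) (r1^2 * PI^2 / (4 * A^2 * Eu))), (d2^2 / El + 4 * r2^2 / El).
  split; [|split].
  - assert (0 < d1^2) by (apply pow_lt; lra).
    assert (0 < r1^2 * PI^2) by (apply Rmult_lt_0_compat; apply pow_lt; lra).
    assert (0 < 4 * A^2 * Eu) by (apply Rmult_lt_0_compat; [apply Rmult_lt_0_compat; [lra|apply pow_lt; lra]|lra]).
    apply Rmin_pos; apply Rdiv_lt_0_compat; lra.
  - assert (0 < d2^2) by (apply pow_lt; lra).
    assert (0 < 4 * r2^2) by (apply Rmult_lt_0_compat; [lra|apply pow_lt; lra]).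
    apply Rplus_lt_0_compat; apply Rdiv_lt_0_compat; lra.
  - intros m Hm.
    exact (per_m m (K m) (a m) (N m) (rt m) (phi m) cK1 cK2 r1 r2 d1 d2 n1 n2
      pcK1 pcK2 pr1 pr2 pd1 pd2 pn1 pn2 (HK' m Hm) (fun k Hk => Hr' m k Hm Hk)
      (fun k Hk => Hdr' m k Hm Hk) (Ha m Hm) (fun k Hk => HN m k Hm Hk) (HNK m Hm)
      (HNK' m Hm) (fun k Hk => Hphi m k Hm Hk) Hm).
Qed.
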